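(* Let $n\ge1$, $\eta\in\mathbb{C}$, $\alpha\in\mathbb{C}\setminus\{0\}$, and let $$T(\lambda)=\begin{pmatrix}A(\lambda)&B(\lambda)\\ C(\lambda)&D(\lambda)\end{pmatrix}=\begin{pmatrix}\alpha\lambda^n+A_1\lambda^{n-1}+\dots+A_n & B_1\lambda^{n-1}+\dots+B_n\\ C_1\lambda^{n-1}+\dots+C_n & \alpha\lambda^n+D_1\lambda^{n-1}+\dots+D_n\end{pmatrix}$$ (i.e. leading coefficients $\alpha=\delta$, $\beta=\gamma=0$), with the $4n$ coefficients $A_i,B_i,C_i,D_i$ as coordinates, equipped with the bracket $\{\cdot,\cdot\}_1$ defined in the context. Then $$\{\operatorname{tr}T(\lambda),\operatorname{tr}T(\mu)\}_1=0$$ for all $\lambda,\mu$; equivalently, the coefficients $H_1,\dots,H_n$ of $\operatorname{tr}T(\lambda)=2\alpha\lambda^n+H_1\lambda^{n-1}+\dots+H_n$ pairwise Poisson commute with respect to $\{\cdot,\cdot\}_1$.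
   Context: Brackets are given by generating functions: the bracket of the coefficient of $\lambda^a$ in an entry $X(\lambda)$ with the coefficient of $\mu^b$ in an entry $Y(\mu)$ is the coefficient of $\lambda^a\mu^b$ in the (polynomial) right-hand side of the formula for $\{X(\lambda),Y(\mu)\}$; leading coefficients are constants; brackets extend by skew-symmetry and the Leibniz rule. For general constant leading coefficients $\alpha,\beta,\gamma,\delta$ ($\alpha\ne0$), the bracket $\{\cdot,\cdot\}_1$ is: $\{A(\lambda),A(\mu)\}_1=\{B(\lambda),B(\mu)\}_1=\{C(\lambda),C(\mu)\}_1=0$, $\{B(\lambda),A(\mu)\}_1=\frac{\eta}{\lambda-\mu}(\lambda B(\lambda)A(\mu)-\mu B(\mu)A(\lambda))-\frac{\eta\beta}{\alpha}A(\lambda)A(\mu)$, $\{C(\lambda),A(\mu)\}_1=\frac{-\eta}{\lambda-\mu}(\lambda C(\lambda)A(\mu)-\mu C(\mu)A(\lambda))+\frac{\eta\gamma}{\alpha}A(\lambda)A(\mu)$, $\{B(\lambda),C(\mu)\}_1=\frac{\eta}{\lambda-\mu}(\lambda D(\lambda)A(\mu)-\mu D(\mu)A(\lambda))-\frac{\eta\delta}{\alpha}A(\lambda)A(\mu)$, $\{B(\lambda),D(\mu)\}_1=\frac{-\eta\lambda}{\lambda-\mu}(B(\lambda)D(\mu)-B(\mu)D(\lambda))+\eta A(\lambda)\left(\frac{\beta}{\alpha}D(\mu)-\frac{\delta}{\alpha}B(\mu)\right)$, $\{C(\lambda),D(\mu)\}_1=\frac{\eta\lambda}{\lambda-\mu}(C(\lambda)D(\mu)-C(\mu)D(\lambda))-\eta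 A(\lambda)\left(\frac{\gamma}{\alpha}D(\mu)-\frac{\delta}{\alpha}C(\mu)\right)$, $\{A(\lambda),D(\mu)\}_1=\frac{\eta\lambda}{\lambda-\mu}(C(\lambda)B(\mu)-C(\mu)B(\lambda))-\eta A(\lambda)\left(\frac{\gamma}{\alpha}B(\mu)-\frac{\beta}{\alpha}C(\mu)\right)$, $\{D(\lambda),D(\mu)\}_1=\frac{\eta\gamma}{\alpha}(D(\lambda)B(\mu)-D(\mu)B(\lambda))-\frac{\eta\beta}{\alpha}(D(\lambda)C(\mu)-D(\mu)C(\lambda))+\frac{\eta\delta}{\alpha}(B(\lambda)C(\mu)-B(\mu)C(\lambda))$. In the claim these are used with $\delta=\alpha$, $\beta=\gamma=0$. *)

(* Defs.v *)
From HB Require Import structures.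
From mathcomp Require Import all_boot all_order all_algebra.
From mathcomp Require Import mpoly.
Set Implicit Arguments. Unset Strict Implicit. Unset Printing Implicit Defensive.
Import Order.TTheory GRing.Theory Num.Theory.
Local Open Scope ring_scope.

Section Bracket.
Variables (K : fieldType) (n : nat).
(* Coordinate ring: polynomials in the 4n coordinates.  Variable number
   X*n + k  (X = 0,1,2,3 for A,B,C,D; k < n) is the coordinate X_{k+1}. *)
Local Notation P := {mpoly K[4 * n]}.

Lemma var_subproof (X : 'I_4) (k : 'I_n) : (X * n + k < 4 * n)%N.
Proof.
case: X k => [X HX] [k Hk] /=.
have : (X * n + k < X * n + n)%N by rewrite ltn_add2l.
move/leq_trans; apply; rewrite -mulSnr leq_mul2r HX orbT.
by [].
Qed.

Definition var (X : 'I_4) (k : 'I_n) : 'I_(4 * n) := Ordinal (var_subproof X k).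

(* kind of a coordinate (0=A,1=B,2=C,3=D) and the power of lambda it
   multiplies in its generating function: X_{k+1} multiplies lambda^(n-1-k). *)
Definition kind (a : 'I_(4 * n)) : nat := (a %/ n)%N.
Definition deg (a : 'I_(4 * n)) : nat := (n.-1 - a %% n)%N.

Definition entry (lc : K) (X : 'I_4) : {poly P} :=
  (lc%:MP)%:P * 'X^n + \sum_(k < n) ('X_(var X k))%:P * 'X^(n.-1 - k).

Variables (alpha beta gamma delta eta : K).

Definition Apol := entry alpha 0.
Definition Bpol := entry beta 1.
Definition Cpol := entry gamma 2.
Definition Dpol := entry delta 3.

(* Bivariate polynomials in (lambda, mu): outer variable lambda, inner mu. *)
Definition Lm (f : {poly P}) : {poly {poly P}} := f ^:P.  (* f(lambda) *)
Definition Mu (f : {poly P}) : {poly {poly P}} := f%:P.   (* f(mu) *)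
Definition lam : {poly {poly P}} := 'X.
Definition mu : {poly {poly P}} := ('X)%:P.
Definition cst (c : K) : {poly {poly P}} := ((c%:MP)%:P)%:P.

Definition dd1 (f g : {poly P}) : {poly {poly P}} :=
  Pdiv.Ring.rdivp (lam * Lm f * Mu g - mu * Mu f * Lm g) (lam - mu).
Definition dd2 (f g : {poly P}) : {poly {poly P}} :=
  Pdiv.Ring.rdivp (lam * (Lm f * Mu g - Mu f * Lm g)) (lam - mu).

Definition ent (X : nat) : {poly P} :=
  match X with 0 => Apol | 1 => Bpol | 2 => Cpol | _ => Dpol end.

(* Pairs (X,Y) for which {X(lambda), Y(mu)}_1 is given explicitly. *)
Definition listed (X Y : nat) : bool :=
  match X, Y with
  | 0, 0 | 1, 1 | 2, 2 | 1, 0 | 2, 0 | 1, 2 | 1, 3 | 2, 3 | 0, 3 | 3, 3 => true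
  | _, _ => false
  end.

(* Right-hand sides of the defining formulas for {X(lambda), Y(mu)}_1. *)
Definition GF (X Y : nat) : {poly {poly P}} :=
  let e := cst eta in
  let A := Apol in let B := Bpol in let C := Cpol in let D := Dpol in
  match X, Y with
  | 1, 0 => e * dd1 B A - e * cst (beta / alpha) * Lm A * Mu A
  | 2, 0 => - e * dd1 C A + e * cst (gamma / alpha) * Lm A * Mu A
  | 1, 2 => e * dd1 D A - e * cst (delta / alpha) * Lm A * Mu A
  | 1, 3 => - e * dd2 B D
            + e * Lm A * (cst (beta / alpha) * Mu D - cst (delta / alpha) * Mu B)
  | 2, 3 => e * dd2 C D
            - e * Lm A * (cst (gamma / alpha) * Mu D - cst (delta / alpha) * Mu C)
  | 0, 3 => e * dd2 C B
            - e * Lm A * (cst (gamma / alpha) * Mu B - cst (beta / alpha) * Mu C)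
  | 3, 3 => e * cst (gamma / alpha) * (Lm D * Mu B - Mu D * Lm B)
            - e * cst (beta / alpha) * (Lm D * Mu C - Mu D * Lm C)
            + e * cst (delta / alpha) * (Lm B * Mu C - Mu B * Lm C)
  | _, _ => 0
  end.

(* Bracket of two coordinates: coefficient of lambda^i mu^j of the
   generating function; unlisted pairs by skew-symmetry. *)
Definition brgen (a b : 'I_(4 * n)) : P :=
  let X := kind a in let Y := kind b in
  if listed X Y then ((GF X Y)`_(deg a))`_(deg b)
  else - ((GF Y X)`_(deg b))`_(deg a).

(* Extension to the whole coordinate ring by bilinearity and Leibniz rule. *)
Definition pb1 (f g : P) : P :=
  \sum_(a < 4 * n) \sum_(b < 4 * n) f^`M(a) * g^`M(b) * brgen a b.

End Bracket.

(* Main.v *)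
Require Import Defs.
From HB Require Import structures.
From mathcomp Require Import all_boot all_order all_algebra.
From mathcomp Require Import mpoly ring zify.
Import Order.TTheory GRing.Theory Num.Theory.
Local Open Scope ring_scope.

Section S.
Variables (K : fieldType) (n : nat).
Local Notation P := {mpoly K[4 * n]}.

Lemma hornerXP (f : {poly P}) : (f ^:P).['X] = f.
Proof.
rewrite horner_coef size_map_polyC.
rewrite -[in RHS](coefK f) poly_def.
by apply: eq_bigr => i _; rewrite coef_map /= mul_polyC.
Qed.

Lemma dd2E (f g : {poly P}) : dd2 f g * (@lam K n - @mu K n) = @lam K n * (Lm f * Mu g - Mu f * Lm g).
Proof.
set R := @lam K n * _.
have : root R 'X.
  by rewrite /root /R /Lm /Mu /lam hornerM hornerX hornerD hornerN !hornerM !hornerC !hornerXP subrr mulr0 eqxx.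
case/factor_theorem => W HW.
by rewrite /dd2 -/R /mu /lam HW Pdiv.RingMonic.rdivp_mull // monicXsubC.
Qed.
End S.
Section S2.
Variables (K : fieldType) (n : nat).
Local Notation P := {mpoly K[4 * n]}.
Local Notation lam := (@lam K n).
Local Notation mu := (@mu K n).

Lemma swap_lam : swapXY lam = mu.
Proof. exact: swapXY_X. Qed.
Lemma swap_mu : swapXY mu = lam.
Proof. exact: swapXY_Y. Qed.
Lemma swap_Lm (f : {poly P}) : swapXY (Lm f) = Mu f.
Proof. exact: swapXY_map_polyC. Qed.
Lemma swap_Mu (f : {poly P}) : swapXY (Mu f) = Lm f.
Proof. exact: swapXY_polyC. Qed.
Lemma swap_cst c : swapXY (@cst K n c) = @cst K n c.
Proof. by rewrite /cst swapXY_polyC map_polyC. Qed.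

Lemma key (e : {poly {poly P}}) (f g : {poly P}) :
  swapXY e = e ->
  e * dd2 f g - swapXY (e * dd2 f g) + e * (Lm g * Mu f - Mu g * Lm f) = 0.
Proof.
move=> se.
set E := (X in X = 0).
have sq : swapXY (lam - mu) = mu - lam.
  by rewrite rmorphB; congr (_ - _); [exact: swap_lam | exact: swap_mu].
set Q := dd2 f g.
have h2 : Q * (lam - mu) = lam * (Lm f * Mu g - Mu f * Lm g) := @dd2E K n f g.
have h1 : swapXY (e * Q) * (mu - lam) = e * (mu * (Mu f * Lm g - Lm f * Mu g)).
  rewrite -sq -rmorphM -mulrA h2 rmorphM /= se; congr (_ * _).
  rewrite rmorphM rmorphB !rmorphM /=; congr (_ * (_ - _)).
  - exact: swap_lam.
  - by congr (_ * _); [exact: swap_Lm | exact: swap_Mu].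
  - by congr (_ * _); [exact: swap_Mu | exact: swap_Lm].
move: h1; set S := swapXY _ => h1.
have : E * (lam - mu) = 0.
  rewrite /E.
  have -> : (e * Q - S + e * (Lm g * Mu f - Mu g * Lm f)) * (lam - mu)
    = e * (Q * (lam - mu)) + S * (mu - lam) + e * (Lm g * Mu f - Mu g * Lm f) * (lam - mu) by ring.
  rewrite h1 h2 /lam /mu; ring.
move=> h; rewrite -[E](Pdiv.RingMonic.rdivp_mull (d := lam - mu)) ?h ?Pdiv.Ring.rdiv0p //.
exact: monicXsubC.
Qed.
End S2.
Section S3.
Variables (K : fieldType) (n : nat).
Local Notation P := {mpoly K[4 * n]}.

Lemma mderivXU (i j : 'I_(4 * n)) : ('X_i : P)^`M(j) = (i == j)%:R.
Proof.
rewrite mderivX mnm1E; case: eqP => [->|_]; last by rewrite scale0r.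
have -> : (U_(j) - U_(j))%MM = 0%MM by apply/mnmP => k; rewrite mnmBE mnm0E subnn.
by rewrite scale1r mpolyX0.
Qed.

Lemma sum_delta m (u : 'I_m) (F : 'I_m -> P) : \sum_(c < m) (u == c)%:R * F c = F u.
Proof.
rewrite (bigD1 u) //= eqxx mul1r big1 ?addr0 // => c /negbTE.
by rewrite eq_sym => ->; rewrite mul0r.
Qed.

Lemma sum_delta2 m (u v : 'I_m) (F : 'I_m -> P) :
  \sum_(c < m) ((u == c)%:R + (v == c)%:R) * F c = F u + F v.
Proof. by rewrite -!sum_delta -big_split; apply: eq_bigr => c _; rewrite mulrDl. Qed.

Lemma pb1_lin (al be ga de et : K) (u v u' v' : 'I_(4 * n)) :
  pb1 al be ga de et ('X_u + 'X_v) ('X_u' + 'X_v') =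
  brgen al be ga de et u u' + brgen al be ga de et u v' +
  (brgen al be ga de et v u' + brgen al be ga de et v v').
Proof.
rewrite /pb1.
under eq_bigr => c _ do under eq_bigr => d _ do
  rewrite !mderivD !mderivXU -mulrA mulrCA.
under eq_bigr => c _ do rewrite sum_delta2.
rewrite big_split /= (sum_delta2 _ u v (brgen al be ga de et ^~ u')) (sum_delta2 _ u v (brgen al be ga de et ^~ v')).
by rewrite addrACA.
Qed.

Lemma kind_var (X : 'I_4) (k : 'I_n) : kind (var X k) = X.
Proof.
rewrite /kind /=; have n0 : (0 < n)%N := leq_ltn_trans (leq0n _) (ltn_ord k).
by rewrite divnMDl // divn_small ?addn0.
Qed.

Lemma deg_var (X : 'I_4) (k : 'I_n) : deg (var X k) = (n.-1 - k)%N.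
Proof. by rewrite /deg /= modnMDl modn_small. Qed.

Lemma coef_entry (lc : K) (X : 'I_4) (k : 'I_n) : (entry n lc X)`_(n.-1 - k) = 'X_(var X k).
Proof.
have kn := ltn_ord k.
rewrite /entry coefD coefCM coefXn.
have -> : (n.-1 - k == n)%N = false by apply/negbTE; lia.
rewrite mulr0 add0r coef_sum (bigD1 k) //= coefCM coefXn eqxx mulr1 big1 ?addr0 //.
move=> j /eqP jk; rewrite coefCM coefXn.
have jn := ltn_ord j.
have -> : (n.-1 - k == n.-1 - j)%N = false.
  by apply/negbTE/eqP => h; apply: jk; apply: val_inj => /=; lia.
by rewrite mulr0.
Qed.

Lemma coef_entry_ge (lc : K) (X : 'I_4) a : (n <= a)%N -> (entry n lc X)`_a = (if a == n then lc%:MP else 0).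
Proof.
move=> na; rewrite /entry coefD coefCM coefXn coef_sum big1 ?addr0.
  by case: eqP; rewrite ?mulr1 ?mulr0.
move=> j _; rewrite coefCM coefXn.
have jn := ltn_ord j.
have -> : (a == n.-1 - j)%N = false by apply/negbTE; lia.
by rewrite mulr0.
Qed.
End S3.
Section S4.
Variables (K : fieldType) (n : nat) (alpha eta : K).
Hypothesis an0 : alpha != 0.
Local Notation br := (@brgen K n alpha 0 0 alpha eta).

Lemma br_AA i j : br (var 0 i) (var 0 j) = 0.
Proof. by rewrite /brgen !kind_var /= !coef0. Qed.

Lemma br_AD i j : br (var 0 i) (var 3 j) = ((GF n alpha 0 0 alpha eta 0 3)`_(n.-1 - i))`_(n.-1 - j).
Proof. by rewrite /brgen !kind_var !deg_var. Qed.

Lemma br_DA i j : br (var 3 i) (var 0 j) = - ((GF n alpha 0 0 alpha eta 0 3)`_(n.-1 - j))`_(n.-1 - i).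
Proof. by rewrite /brgen !kind_var !deg_var. Qed.

Lemma br_DD i j : br (var 3 i) (var 3 j) = ((GF n alpha 0 0 alpha eta 3 3)`_(n.-1 - i))`_(n.-1 - j).
Proof. by rewrite /brgen !kind_var !deg_var. Qed.
Local Notation e := (cst n eta).
Local Notation A := (Apol n alpha).
Local Notation B := (Bpol n (0 : K)).
Local Notation C := (Cpol n (0 : K)).
Local Notation D := (Dpol n alpha).

Lemma GF03E : GF n alpha 0 0 alpha eta 0 3 = e * dd2 C B
            - e * Lm A * (cst n (0 / alpha) * Mu B - cst n (0 / alpha) * Mu C).
Proof. reflexivity. Qed.

Lemma GF33E : GF n alpha 0 0 alpha eta 3 3 =
  e * cst n (0 / alpha) * (Lm D * Mu B - Mu D * Lm B)
            - e * cst n (0 / alpha) * (Lm D * Mu C - Mu D * Lm C)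
            + e * cst n (alpha / alpha) * (Lm B * Mu C - Mu B * Lm C).
Proof. reflexivity. Qed.

Lemma simp03 (R : comNzRingType) (e Q a b c : R) : e * Q - e * a * (0 * b - 0 * c) = e * Q.
Proof. by rewrite !mul0r subrr mulr0 subr0. Qed.
Lemma simp33 (R : comNzRingType) (e b c b' c' d d' : R) :
  e * 0 * (d * b' - d' * b) - e * 0 * (d * c - d' * c') + e * 1 * (b * c - b' * c') = e * (b * c - b' * c').
Proof. by rewrite mulr1 mulr0 !mul0r subrr add0r. Qed.
Lemma GF_key : GF n alpha 0 0 alpha eta 0 3 - swapXY (GF n alpha 0 0 alpha eta 0 3)
  + GF n alpha 0 0 alpha eta 3 3 = 0.
Proof.
have z : (0 / alpha = 0 :> K) by rewrite mul0r.
have c0 : cst n (0/alpha) = 0 by apply/eqP; rewrite z /cst !polyC_eq0 mpolyC_eq0.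
have o : (alpha / alpha = 1 :> K) by rewrite divff.
have c1 : cst n (alpha/alpha) = 1.
  rewrite o /cst mpolyC1.
  rewrite polyC1.
  exact: polyC1.
have G03 : GF n alpha 0 0 alpha eta 0 3 = e * dd2 C B.
  timeout 10 (rewrite GF03E c0).
  timeout 10 (exact: simp03).
have G33 : GF n alpha 0 0 alpha eta 3 3 = e * (Lm B * Mu C - Mu B * Lm C).
  timeout 10 (rewrite GF33E c0 c1).
  timeout 10 (exact: simp33).
timeout 10 (rewrite G03 G33).
have se : swapXY e = e by exact: swap_cst.
timeout 20 (exact: (@key K n _ _ _ se)).
Qed.
End S4.

Lemma coef_swap_gen (R : nzRingType) (X Y : {poly {poly R}}) p q :
  X - swapXY X + Y = 0 -> X`_p`_q + (- X`_q`_p + Y`_p`_q) = 0.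
Proof.
move/(congr1 (fun F : {poly {poly R}} => F`_p`_q)).
by rewrite !coefD !coefN coef_swapXY !coef0 addrA.
Qed.

Section S5.
Variables (K : fieldType) (n : nat) (alpha eta : K).
Local Notation P := {mpoly K[4 * n]}.
Local Notation T := (Apol n alpha + Dpol n alpha).

Lemma pb1_constl (f g : P) : (forall c, f^`M(c) = 0) -> pb1 alpha 0 0 alpha eta f g = 0.
Proof. by move=> H; rewrite /pb1 big1 // => c _; rewrite big1 // => d _; rewrite H !mul0r. Qed.

Lemma pb1_constr (f g : P) : (forall c, g^`M(c) = 0) -> pb1 alpha 0 0 alpha eta f g = 0.
Proof. by move=> H; rewrite /pb1 big1 // => c _; rewrite big1 // => d _; rewrite H mulr0 mul0r. Qed.

Lemma Tge (a : nat) : (n <= a)%N ->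
  T`_a = (if a == n then alpha%:MP else 0) + (if a == n then alpha%:MP else 0).
Proof.
move=> na; timeout 10 (rewrite coefD); congr (_ + _).
  exact: coef_entry_ge.
exact: coef_entry_ge.
Qed.

Lemma Tlt (k : 'I_n) : T`_(n.-1 - k) = 'X_(var 0 k) + 'X_(var 3 k).
Proof.
timeout 10 (rewrite coefD); congr (_ + _).
  exact: coef_entry.
exact: coef_entry.
Qed.

Lemma trcoef (a : nat) : (forall c, (T`_a)^`M(c) = 0) \/
  exists k : 'I_n, T`_a = 'X_(var 0 k) + 'X_(var 3 k).
Proof.
have [na | an] := leqP n a.
  left => c; timeout 10 (rewrite Tge //).
  timeout 10 (by case: (a == n); rewrite ?mderivD ?mderivC ?mderiv0 addr0).
right.
have kn : (n.-1 - a < n)%N by lia.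
exists (Ordinal kn).
rewrite -Tlt; congr (_ `_ _); rewrite /=; lia.
Qed.
End S5.

Theorem proposition3 (C : numClosedFieldType) (n : nat) (eta alpha : C) :
  (1 <= n)%N -> alpha != 0 ->
  forall a b : nat,
    pb1 alpha 0 0 alpha eta
      ((Apol n alpha + Dpol n alpha)`_a) ((Apol n alpha + Dpol n alpha)`_b) = 0.
Proof.
move=> n1 an0 a b.
case: (@trcoef _ n alpha a) => [Ha | [k Ek]]; first exact: pb1_constl.
case: (@trcoef _ n alpha b) => [Hb | [l El]]; first exact: pb1_constr.
timeout 10 (rewrite Ek El).
timeout 10 (rewrite pb1_lin).
timeout 10 (rewrite br_AA br_AD br_DA br_DD // add0r).
exact: (@coef_swap_gen _ _ _ _ _ (@GF_key C n alpha eta an0)).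
Qed.
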